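(* Let $L$ be an infinite set and consider the edged cube $\bar Q_L$. For a basic sequence, the following are equivalent: it is convergent over $f_{\mathrm{solved}}$; it is universally convergent; it is twist-finite.
   Context: Let $L$ be an infinite set, $-L=\{-r:r\in L\}$ a disjoint copy of $L$, and $0$ a new element; $L^\dagger=-L\cup\{0\}\cup L$ with $-(-r)=r$, $-0=0$. Adjoin $\pm\infty$ with $-(+\infty)=-\infty$ and set $\bar L^\dagger=L^\dagger\cup\{\pm\infty\}$. Points of $U=(\bar L^\dagger)^3$ have coordinates $x,y,z$. The edged cube $\bar Q_L$ is the set of cells $(p,i)$ with $p\in U$, $i\in\{x,y,z\}$, $p_i\in\{\pm\infty\}$ ($i$ marks the face of the cell). For $i\in\{x,y,z\}$, $\alpha\in\bar L^\dagger$, the quarter-turn twist $T_{i,\alpha}$ is the permutation of cells fixing every cell whose point $p$ has $p_i\ne\alpha$ and acting on the others by the rotation $T_{x,\alpha}(\alpha,y,z)=(\alpha,-z,y)$, $T_{y,\alpha}(x,\alpha,z)=(z,\alpha,-x)$, $T_{z,\alpha}(x,y,\alpha)=(-y,x,\alpha)$, the marked coordinate being carried along by the rotation. Basic twists are $T,T^2,T^3$ for quarter-turn twists $T$. A basic sequence is a sequence $\langle\sigma_\eta:\eta<\theta\rangle$ of basic twists of ordinal length $\theta$; it is twist-finite if each basic twist occurs in it only finitely many times. A labelling is a map $f$ from cells to $X\cup\{\mathrm{NaC}\}$ for a set $X\not\ni\mathrm{NaC}$; it is legal if it never takes value NaC; a configuration is a labelling with $X$ the six colors red, white, green, orange, yellow,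 blue. The solved configuration $f_{\mathrm{solved}}$ colors cell $(p,i)$ red, blue, white, orange, green, yellow according as $p_i=+\infty$ with $i=x,y,z$, or $p_i=-\infty$ with $i=x,y,z$. A twist $\sigma$ acts by $(\sigma f)(c)=f(\sigma^{-1}c)$. Applying $\langle\sigma_\eta:\eta<\theta\rangle$ to $f_0$ produces $f_{\eta+1}=\sigma_\eta f_\eta$, and for limit $\lambda\le\theta$, $f_\lambda(c)$ is the eventually constant value of $f_\eta(c)$ ($\eta<\lambda$) if it exists and NaC otherwise; $f_\theta$ is the terminal labelling. The sequence is convergent over $f_0$ if $f_\theta$ is legal, and universally convergent if it is convergent over the identity labelling (each cell labelled by itself). *)

(* Defs.v *)
From Stdlib Require Import List Classical ClassicalEpsilon.
Set Implicit Arguments.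

Definition infinite (L : Type) : Prop := forall l : list L, exists x : L, ~ In x l.

Inductive coord (L : Type) : Type :=
  | cpos : L -> coord L
  | cneg : L -> coord L
  | czero : coord L
  | pinf : coord L
  | ninf : coord L.
Arguments czero {L}. Arguments pinf {L}. Arguments ninf {L}.

Definition cneg_op {L} (v : coord L) : coord L :=
  match v with
  | cpos r => cneg r | cneg r => cpos r | czero => czero
  | pinf => ninf | ninf => pinf end.

Inductive axis : Type := AX | AY | AZ.

Definition point (L : Type) : Type := (coord L * coord L * coord L)%type.

Definition get {L} (p : point L) (i : axis) : coord L :=
  match p, i with
  | (x, _, _), AX => x | (_, y, _), AY => y | (_, _, z), AZ => z end.

Definition is_inf {L} (v : coord L) : bool :=
  match v with pinf | ninf => true | _ => false end.

Definition cell (L : Type) : Type :=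
  { q : point L * axis | is_inf (get (fst q) (snd q)) = true }.

Definition rot_pt {L} (i : axis) (p : point L) : point L :=
  match p with (x, y, z) =>
  match i with
  | AX => (x, cneg_op z, y)
  | AY => (z, y, cneg_op x)
  | AZ => (cneg_op y, x, z)
  end end.

(* where the marked coordinate is carried by the rotation *)
Definition rot_ax (i j : axis) : axis :=
  match i, j with
  | AX, AX => AX | AX, AY => AZ | AX, AZ => AY
  | AY, AX => AZ | AY, AY => AY | AY, AZ => AX
  | AZ, AX => AY | AZ, AY => AX | AZ, AZ => AZ end.

Lemma rot_cell_ok {L} (i : axis) (q : point L * axis) :
  is_inf (get (fst q) (snd q)) = true ->
  is_inf (get (rot_pt i (fst q)) (rot_ax i (snd q))) = true.
Proof.
  destruct q as [[[x y] z] j]; simpl.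
  destruct i, j, x, y, z; simpl; auto.
Qed.

Definition rot_cell {L} (i : axis) (c : cell L) : cell L :=
  exist _ (rot_pt i (fst (proj1_sig c)), rot_ax i (snd (proj1_sig c)))
        (@rot_cell_ok L i (proj1_sig c) (proj2_sig c)).

Definition twist {L} (i : axis) (alpha : coord L) (c : cell L) : cell L :=
  if excluded_middle_informative (get (fst (proj1_sig c)) i = alpha)
  then rot_cell i c else c.

Inductive power : Type := P1 | P2 | P3.
Definition pow_nat (k : power) : nat := match k with P1 => 1 | P2 => 2 | P3 => 3 end.

Record basic_twist (L : Type) : Type := BT
  { bt_axis : axis; bt_val : coord L; bt_pow : power }.

Definition bt_perm {L} (b : basic_twist L) (c : cell L) : cell L :=
  Nat.iter (pow_nat (bt_pow b)) (twist (bt_axis b) (bt_val b)) c.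
Definition bt_perm_inv {L} (b : basic_twist L) (c : cell L) : cell L :=
  Nat.iter (4 - pow_nat (bt_pow b)) (twist (bt_axis b) (bt_val b)) c.

(* labellings: None = NaC *)
Definition labelling (L X : Type) : Type := cell L -> option X.
Definition legal {L X} (f : labelling L X) : Prop := forall c, f c <> None.

Definition act {L X} (b : basic_twist L) (f : labelling L X) : labelling L X :=
  fun c => f (bt_perm_inv b c).

Inductive color : Type := red | white | green | orange | yellow | blue.

Definition f_solved {L} : labelling L color :=
  fun c => let (p, i) := proj1_sig c in
  match get p i, i with
  | pinf, AX => Some red | pinf, AY => Some blue | pinf, AZ => Some white
  | ninf, AX => Some orange | ninf, AY => Some green | ninf, AZ => Some yellow
  | _, _ => Some red (* impossible for a cell *)
  end.

Definition f_identity {L} : labelling L (cell L) := fun c => Some c.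

(* An ordinal theta is represented by a well-ordered index type (I, lt). *)
Definition well_order {I} (lt : I -> I -> Prop) : Prop :=
  well_founded lt /\ (forall a b c, lt a b -> lt b c -> lt a c) /\
  (forall a b, lt a b \/ a = b \/ lt b a).

(* stages eta <= theta: Some eta for eta < theta, None for theta itself *)
Definition stage (I : Type) := option I.
Definition slt {I} (lt : I -> I -> Prop) (s t : stage I) : Prop :=
  match s, t with
  | Some a, Some b => lt a b
  | Some _, None => True
  | None, _ => False end.
Definition sle {I} (lt : I -> I -> Prop) (s t : stage I) : Prop := slt lt s t \/ s = t.

Definition is_limit {I} (lt : I -> I -> Prop) (s : stage I) : Prop :=
  (exists t, slt lt t s) /\ (forall t, slt lt t s -> exists u, slt lt t u /\ slt lt u s).

Definition eventually_const {I L X} (lt : I -> I -> Prop) (F : stage I -> labelling L X)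
  (s : stage I) (c : cell L) (v : option X) : Prop :=
  exists t, slt lt t s /\ forall u, sle lt t u -> slt lt u s -> F u c = v.

Definition is_run {I L X} (lt : I -> I -> Prop) (sigma : I -> basic_twist L)
  (f0 : labelling L X) (F : stage I -> labelling L X) : Prop :=
  (* f_0 = f0 *)
  (forall s, (forall t, ~ slt lt t s) -> F s = f0) /\
  (* f_{eta+1} = sigma_eta f_eta *)
  (forall (e : I) (s : stage I), slt lt (Some e) s ->
     (forall t, slt lt (Some e) t -> sle lt s t) ->
     F s = act (sigma e) (F (Some e))) /\
  (forall s, is_limit lt s -> forall c,
     (forall v, eventually_const lt F s c v -> F s c = v) /\
     ((~ exists v, eventually_const lt F s c v) -> F s c = None)).

Definition convergent {I L X} (lt : I -> I -> Prop) (sigma : I -> basic_twist L)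
  (f0 : labelling L X) : Prop :=
  exists F, is_run lt sigma f0 F /\ legal (F None).

Definition universally_convergent {I L} (lt : I -> I -> Prop)
  (sigma : I -> basic_twist L) : Prop :=
  convergent lt sigma (@f_identity L).

Definition twist_finite {I L} (sigma : I -> basic_twist L) : Prop :=
  forall b : basic_twist L, exists l : list I, forall e, sigma e = b -> In e l.

(* Main.v *)
Require Import Defs.
From Stdlib Require Import List Bool Classical ClassicalEpsilon FunctionalExtensionality Eqdep_dec Arith Lia.
Import ListNotations.
Set Implicit Arguments.

Definition sgn {L} (b : bool) (v : coord L) : coord L := if b then cneg_op v else v.

Inductive sp : Type := SP : axis -> bool -> axis -> bool -> axis -> bool -> sp.

Definition ssrc (s : sp) (k : axis) : axis :=
  match s, k with SP a _ _ _ _ _, AX => a | SP _ _ a _ _ _, AY => a | SP _ _ _ _ a _, AZ => a end.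
Definition nsel (s : sp) (k : axis) : bool :=
  match s, k with SP _ a _ _ _ _, AX => a | SP _ _ _ a _ _, AY => a | SP _ _ _ _ _ a, AZ => a end.

Definition spt {L} (s : sp) (p : point L) : point L :=
  (sgn (nsel s AX) (get p (ssrc s AX)), sgn (nsel s AY) (get p (ssrc s AY)),
   sgn (nsel s AZ) (get p (ssrc s AZ))).

Definition axis_eqb (a b : axis) : bool :=
  match a, b with AX, AX | AY, AY | AZ, AZ => true | _, _ => false end.
Lemma axis_eqb_eq a b : axis_eqb a b = true <-> a = b.
Proof. destruct a, b; simpl; split; congruence. Qed.

Definition sax (s : sp) (j : axis) : axis :=
  if axis_eqb (ssrc s AX) j then AX else if axis_eqb (ssrc s AY) j then AY else AZ.

Definition comp (a b : sp) : sp :=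
  SP (ssrc b (ssrc a AX)) (xorb (nsel a AX) (nsel b (ssrc a AX)))
     (ssrc b (ssrc a AY)) (xorb (nsel a AY) (nsel b (ssrc a AY)))
     (ssrc b (ssrc a AZ)) (xorb (nsel a AZ) (nsel b (ssrc a AZ))).

Definition sid : sp := SP AX false AY false AZ false.
Definition gen (i : axis) : sp :=
  match i with
  | AX => SP AX false AZ true AY false
  | AY => SP AZ false AY false AX true
  | AZ => SP AY true AX false AZ false end.

Fixpoint gpow (i : axis) (n : nat) : sp :=
  match n with 0 => sid | S m => comp (gen i) (gpow i m) end.

Definition axes := [AX; AY; AZ].
Definition perms : list (axis * axis * axis) :=
  [(AX,AY,AZ); (AX,AZ,AY); (AY,AX,AZ); (AY,AZ,AX); (AZ,AX,AY); (AZ,AY,AX)].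
Definition podd (t : axis * axis * axis) : bool :=
  match t with (AX,AY,AZ) | (AY,AZ,AX) | (AZ,AX,AY) => false | _ => true end.
Definition bools := [false; true].
Definition all48 : list sp :=
  flat_map (fun t => match t with (a,b,c) =>
    flat_map (fun n1 => flat_map (fun n2 => map (fun n3 => SP a n1 b n2 c n3) bools) bools) bools end) perms.
Definition det (s : sp) : bool :=
  match s with SP a n1 b n2 c n3 => xorb (podd (a,b,c)) (xorb n1 (xorb n2 n3)) end.
Definition G : list sp := filter (fun s => negb (det s)) all48.

Definition sp_eq_dec (a b : sp) : {a = b} + {a <> b}.
Proof. decide equality; first [apply bool_dec | decide equality]. Defined.
Definition speqb a b : bool := if sp_eq_dec a b then true else false.
Definition inG s : bool := existsb (speqb s) G.
Lemma inG_In s : inG s = true -> In s G.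
Proof. unfold inG. rewrite existsb_exists. intros [x [H1 H2]]. unfold speqb in H2.
  destruct (sp_eq_dec s x); congruence. Qed.

Lemma fa_In {A} (f : A -> bool) l : forallb f l = true -> forall x, In x l -> f x = true.
Proof. rewrite forallb_forall. auto. Qed.

Definition chk_clos := forallb (fun a => forallb (fun b => inG (comp a b)) G) G.
Lemma chk_clos_ok : chk_clos = true. Proof. vm_compute. reflexivity. Qed.
Lemma G_comp a b : In a G -> In b G -> In (comp a b) G.
Proof. intros Ha Hb. apply inG_In. exact (fa_In _ _ (fa_In _ _ chk_clos_ok a Ha) b Hb). Qed.

Definition chk_inv := forallb (fun a => existsb (fun b => speqb (comp a b) sid && speqb (comp b a) sid && inG b) G) G.
Lemma chk_inv_ok : chk_inv = true. Proof. vm_compute. reflexivity. Qed.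
Lemma G_inv a : In a G -> exists b, In b G /\ comp a b = sid /\ comp b a = sid.
Proof. intro Ha. pose proof (fa_In _ _ chk_inv_ok a Ha) as H.
  apply existsb_exists in H. destruct H as [b [Hb H]]. exists b.
  apply andb_true_iff in H as [H H3]. apply andb_true_iff in H as [H1 H2]. apply inG_In in H3.
  unfold speqb in *. destruct (sp_eq_dec (comp a b) sid), (sp_eq_dec (comp b a) sid); try discriminate.
  auto. Qed.

Definition chk_saxc := forallb (fun a => forallb (fun b => forallb (fun j =>
   axis_eqb (sax (comp a b) j) (sax a (sax b j))) axes) G) G.
Lemma chk_saxc_ok : chk_saxc = true. Proof. vm_compute. reflexivity. Qed.
Lemma sax_comp a b j : In a G -> In b G -> sax (comp a b) j = sax a (sax b j).
Proof. intros Ha Hb. apply axis_eqb_eq.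
  apply (fa_In _ _ (fa_In _ _ (fa_In _ _ chk_saxc_ok a Ha) b Hb)). destruct j; simpl; auto. Qed.

Definition chk_srcsax := forallb (fun a => forallb (fun j => axis_eqb (ssrc a (sax a j)) j) axes) G.
Lemma chk_srcsax_ok : chk_srcsax = true. Proof. vm_compute. reflexivity. Qed.
Lemma src_sax a j : In a G -> ssrc a (sax a j) = j.
Proof. intros Ha. apply axis_eqb_eq. apply (fa_In _ _ (fa_In _ _ chk_srcsax_ok a Ha)). destruct j; simpl; auto. Qed.

Lemma sax_inj a j1 j2 : In a G -> sax a j1 = sax a j2 -> j1 = j2.
Proof. intros Ha H. rewrite <- (src_sax j1 Ha), <- (src_sax j2 Ha), H. reflexivity. Qed.

Definition chk_fix := forallb (fun a => forallb (fun j1 => forallb (fun j2 =>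
  implb (negb (axis_eqb j1 j2) && axis_eqb (sax a j1) j1 && negb (nsel a j1)
         && axis_eqb (sax a j2) j2 && negb (nsel a j2)) (speqb a sid)) axes) axes) G.
Lemma chk_fix_ok : chk_fix = true. Proof. vm_compute. reflexivity. Qed.
Lemma fix_sid a j1 j2 : In a G -> j1 <> j2 -> sax a j1 = j1 -> nsel a j1 = false ->
  sax a j2 = j2 -> nsel a j2 = false -> a = sid.
Proof. intros Ha Hj H1 H2 H3 H4.
  assert (Hj1 : In j1 axes) by (destruct j1; simpl; auto).
  assert (Hj2 : In j2 axes) by (destruct j2; simpl; auto).
  pose proof (fa_In _ _ (fa_In _ _ (fa_In _ _ chk_fix_ok a Ha) j1 Hj1) j2 Hj2) as H. simpl in H.
  rewrite H1, H2, H3, H4 in H. destruct (axis_eqb j1 j2) eqn:E.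
  - apply axis_eqb_eq in E. contradiction.
  - assert (axis_eqb j1 j1 = true) by (apply axis_eqb_eq; auto).
    assert (axis_eqb j2 j2 = true) by (apply axis_eqb_eq; auto).
    rewrite H0, H5 in H. simpl in H. unfold speqb in H. destruct (sp_eq_dec a sid); congruence. Qed.

Lemma gen_G i : In (gen i) G. Proof. apply inG_In. destruct i; vm_compute; reflexivity. Qed.
Lemma sid_G : In sid G. Proof. apply inG_In. vm_compute; reflexivity. Qed.
Lemma gpow_G i n : In (gpow i n) G.
Proof. induction n; simpl. apply sid_G. apply G_comp; auto using gen_G. Qed.

Lemma sgn_sgn {L} a b (v : coord L) : sgn a (sgn b v) = sgn (xorb a b) v.
Proof. destruct a, b, v; reflexivity. Qed.
Lemma is_inf_sgn {L} b (v : coord L) : is_inf (sgn b v) = is_inf v.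
Proof. destruct b, v; reflexivity. Qed.
Lemma get_spt {L} s (p : point L) k : get (spt s p) k = sgn (nsel s k) (get p (ssrc s k)).
Proof. destruct k; reflexivity. Qed.
Lemma point_ext {L} (p q : point L) : (forall k, get p k = get q k) -> p = q.
Proof. destruct p as [[x y] z], q as [[x' y'] z']. intro H.
  pose proof (H AX); pose proof (H AY); pose proof (H AZ); simpl in *; subst; reflexivity. Qed.
Lemma spt_comp {L} a b (p : point L) : spt (comp a b) p = spt a (spt b p).
Proof. apply point_ext. intro k. rewrite !get_spt, sgn_sgn.
  destruct a; destruct k; reflexivity. Qed.
Lemma spt_sid {L} (p : point L) : spt sid p = p.
Proof. destruct p as [[x y] z]; reflexivity. Qed.
Lemma get_spt_sax {L} s (p : point L) j : In s G -> get (spt s p) (sax s j) = sgn (nsel s (sax s j)) (get p j).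
Proof. intro H. rewrite get_spt, src_sax; auto. Qed.
Lemma gen_keep {L} i (p : point L) : get (spt (gen i) p) i = get p i.
Proof. destruct i, p as [[x y] z]; reflexivity. Qed.
Lemma gpow_keep {L} i n (p : point L) : get (spt (gpow i n) p) i = get p i.
Proof. induction n. change (gpow i 0) with sid; rewrite spt_sid; auto.
  change (gpow i (S n)) with (comp (gen i) (gpow i n)); rewrite spt_comp, gen_keep; auto. Qed.
Lemma rot_pt_gen {L} i (p : point L) : rot_pt i p = spt (gen i) p.
Proof. destruct i, p as [[x y] z]; reflexivity. Qed.
Lemma rot_ax_gen i j : rot_ax i j = sax (gen i) j.
Proof. destruct i, j; reflexivity. Qed.

Definition pt {L} (c : cell L) : point L := fst (proj1_sig c).
Definition ax {L} (c : cell L) : axis := snd (proj1_sig c).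

Lemma cell_eq {L} (c1 c2 : cell L) : proj1_sig c1 = proj1_sig c2 -> c1 = c2.
Proof. destruct c1 as [r1 H1], c2 as [r2 H2]; simpl. intro E. subst.
  f_equal. apply UIP_dec. apply bool_dec. Qed.

Definition rs {L} (s : sp) (r : point L * axis) : point L * axis := (spt s (fst r), sax s (snd r)).

Definition scell {L} (s : sp) (c : cell L) : cell L :=
  match bool_dec (is_inf (get (spt s (pt c)) (sax s (ax c)))) true with
  | left H => exist _ (rs s (proj1_sig c)) H
  | right _ => c end.

Lemma inf_pres {L} s (q : point L) j : In s G -> is_inf (get q j) = true ->
  is_inf (get (spt s q) (sax s j)) = true.
Proof. intros Hs H. rewrite get_spt_sax, is_inf_sgn; auto. Qed.

Lemma scell_proj {L} s (c : cell L) : In s G -> proj1_sig (scell s c) = rs s (proj1_sig c).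
Proof. intro Hs. unfold scell. destruct bool_dec as [H|H]. reflexivity.
  exfalso. apply H. apply inf_pres; auto. exact (proj2_sig c). Qed.
Lemma pt_scell {L} s (c : cell L) : In s G -> pt (scell s c) = spt s (pt c).
Proof. intro Hs. unfold pt at 1. rewrite scell_proj; auto. Qed.
Lemma ax_scell {L} s (c : cell L) : In s G -> ax (scell s c) = sax s (ax c).
Proof. intro Hs. unfold ax at 1. rewrite scell_proj; auto. Qed.
Lemma scell_comp {L} a b (c : cell L) : In a G -> In b G -> scell (comp a b) c = scell a (scell b c).
Proof. intros Ha Hb. apply cell_eq. rewrite !scell_proj; auto using G_comp.
  unfold rs; simpl. rewrite spt_comp, sax_comp; auto. Qed.
Lemma scell_sid {L} (c : cell L) : scell sid c = c.
Proof. apply cell_eq. rewrite scell_proj by apply sid_G. destruct c as [[p j] H]; unfold rs; simpl.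
  rewrite spt_sid. destruct j; reflexivity. Qed.

Definition Rm {L} (i : axis) (a : coord L) (m : nat) (p : point L) : sp :=
  if excluded_middle_informative (get p i = a) then gpow i m else sid.
Lemma Rm_G {L} i (a : coord L) m p : In (Rm i a m p) G.
Proof. unfold Rm. destruct excluded_middle_informative. apply gpow_G. apply sid_G. Qed.
Lemma Rm_congr {L} i (a : coord L) m p p' : get p i = get p' i -> Rm i a m p = Rm i a m p'.
Proof. intro E. unfold Rm. rewrite E. reflexivity. Qed.
Lemma Rm_keep {L} i (a : coord L) m p (q : point L) : get (spt (Rm i a m p) q) i = get q i.
Proof. unfold Rm. destruct excluded_middle_informative. apply gpow_keep. rewrite spt_sid; auto. Qed.

Lemma iter_twist {L} i (a : coord L) m c :
  Nat.iter m (twist i a) c = scell (Rm i a m (pt c)) c.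
Proof.
  induction m.
  - simpl. unfold Rm. destruct excluded_middle_informative; rewrite scell_sid; auto.
  - change (Nat.iter (S m) (twist i a) c) with (twist i a (Nat.iter m (twist i a) c)).
    rewrite IHm. unfold twist at 1.
    change (fst (proj1_sig (scell (Rm i a m (pt c)) c))) with (pt (scell (Rm i a m (pt c)) c)).
    rewrite pt_scell by apply Rm_G. rewrite Rm_keep.
    unfold Rm. destruct (excluded_middle_informative (get (pt c) i = a)).
    + change (gpow i (S m)) with (comp (gen i) (gpow i m)).
      rewrite scell_comp by (auto using gen_G, gpow_G).
      apply cell_eq. rewrite scell_proj by apply gen_G. unfold rot_cell; simpl.
      unfold rs. rewrite rot_pt_gen, rot_ax_gen. reflexivity.
    + rewrite !scell_sid. auto.
Qed.

Definition Rb {L} (b : basic_twist L) (m : nat) (p : point L) : sp := Rm (bt_axis b) (bt_val b) m p.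

Lemma bpi_eq {L} (b : basic_twist L) c :
  bt_perm_inv b c = scell (Rb b (4 - pow_nat (bt_pow b)) (pt c)) c.
Proof. unfold bt_perm_inv. apply iter_twist. Qed.
Lemma bp_eq {L} (b : basic_twist L) c :
  bt_perm b c = scell (Rb b (pow_nat (bt_pow b)) (pt c)) c.
Proof. unfold bt_perm. apply iter_twist. Qed.

Lemma comp_Rm {L} i (a : coord L) m1 m2 p : m1 + m2 = 4 ->
  comp (Rm i a m1 p) (Rm i a m2 p) = sid.
Proof. intro H. unfold Rm. destruct excluded_middle_informative.
  - assert (m1 = 0 /\ m2 = 4 \/ m1 = 1 /\ m2 = 3 \/ m1 = 2 /\ m2 = 2 \/ m1 = 3 /\ m2 = 1 \/ m1 = 4 /\ m2 = 0) by lia.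
    destruct i; intuition subst; vm_compute; reflexivity.
  - vm_compute; reflexivity. Qed.

Lemma bpi_bp {L} (b : basic_twist L) c : bt_perm_inv b (bt_perm b c) = c.
Proof. rewrite bp_eq, bpi_eq. rewrite pt_scell by apply Rm_G.
  unfold Rb. rewrite (Rm_congr _ _ _ (spt _ (pt c)) (pt c)) by apply Rm_keep.
  rewrite <- scell_comp by apply Rm_G. rewrite comp_Rm. apply scell_sid.
  destruct (bt_pow b); simpl; lia. Qed.
Lemma bp_bpi {L} (b : basic_twist L) c : bt_perm b (bt_perm_inv b c) = c.
Proof. rewrite bp_eq, bpi_eq. rewrite pt_scell by apply Rm_G.
  unfold Rb. rewrite (Rm_congr _ _ _ (spt _ (pt c)) (pt c)) by apply Rm_keep.
  rewrite <- scell_comp by apply Rm_G. rewrite comp_Rm. apply scell_sid.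
  destruct (bt_pow b); simpl; lia. Qed.

Definition two_inf {L} (q : point L) : Prop :=
  exists j1 j2, j1 <> j2 /\ is_inf (get q j1) = true /\ is_inf (get q j2) = true.

Definition INV {L X} (f : labelling L X) : Prop :=
  forall s, In s G -> forall q : point L, two_inf q ->
  (forall c, pt c = q -> f (scell s c) = f c /\ f c <> None) -> spt s q = q.

Lemma INV_identity {L} : INV (@f_identity L).
Proof. intros s Hs q [j1 [j2 [Hj [H1 H2]]]] H.
  pose (c1 := exist (fun r : point L * axis => is_inf (get (fst r) (snd r)) = true) (q, j1) H1 : cell L).
  destruct (H c1 eq_refl) as [E _]. unfold f_identity in E. injection E as E.
  apply (f_equal (@proj1_sig _ _)) in E. rewrite scell_proj in E by auto.
  unfold rs in E; simpl in E. congruence. Qed.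

Definition solcol {L} (v : coord L) (i : axis) : option color :=
  match v, i with
  | pinf, AX => Some red | pinf, AY => Some blue | pinf, AZ => Some white
  | ninf, AX => Some orange | ninf, AY => Some green | ninf, AZ => Some yellow
  | _, _ => Some red end.
Lemma f_solved_eq {L} (c : cell L) : f_solved c = solcol (get (pt c) (ax c)) (ax c).
Proof. destruct c as [[p i] H]; reflexivity. Qed.
Lemma solcol_inj {L} (v v' : coord L) j j' : is_inf v = true -> is_inf v' = true ->
  solcol v j = solcol v' j' -> v = v' /\ j = j'.
Proof. destruct v, v', j, j'; simpl; intros; try discriminate; auto. Qed.

Lemma solved_fix {L} s (q : point L) j : In s G -> is_inf (get q j) = true ->
  (forall c, pt c = q -> f_solved (scell s c) = f_solved c /\ f_solved c <> None) ->
  sax s j = j /\ nsel s j = false.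
Proof. intros Hs Hj H.
  pose (c1 := exist (fun r : point L * axis => is_inf (get (fst r) (snd r)) = true) (q, j) Hj : cell L).
  destruct (H c1 eq_refl) as [E _]. rewrite !f_solved_eq in E.
  rewrite pt_scell, ax_scell in E by auto.
  change (pt c1) with q in E. change (ax c1) with j in E.
  rewrite get_spt_sax in E by auto.
  apply solcol_inj in E; [| rewrite is_inf_sgn; auto | auto]. destruct E as [E1 E2].
  split; auto. rewrite E2 in E1. clear c1 H E2. destruct (nsel s j); auto.
  destruct (get q j); simpl in *; discriminate. Qed.

Lemma INV_solved {L} : INV (@f_solved L).
Proof. intros s Hs q [j1 [j2 [Hj [H1 H2]]]] H.
  destruct (@solved_fix L s q j1 Hs H1 H) as [A1 B1]. destruct (@solved_fix L s q j2 Hs H2 H) as [A2 B2].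
  rewrite (fix_sid Hs Hj A1 B1 A2 B2). apply spt_sid. Qed.

Lemma INV_act {L X} (b : basic_twist L) (f : labelling L X) : INV f -> INV (act b f).
Proof.
  intros HI s Hs q Hq H. unfold act in H.
  set (m := 4 - pow_nat (bt_pow b)).
  set (A := Rb b m q). set (B := Rb b m (spt s q)).
  assert (HA : In A G) by apply Rm_G. assert (HB : In B G) by apply Rm_G.
  destruct (G_inv HA) as [Ai [HAi [E1 E2]]].
  set (s' := comp B (comp s Ai)).
  assert (Hs' : In s' G) by (apply G_comp; auto; apply G_comp; auto).
  assert (K : spt s' (spt A q) = spt A q).
  { apply (HI s' Hs').
    - destruct Hq as [j1 [j2 [Hj [H1 H2]]]]. exists (sax A j1), (sax A j2). split.
      intro E. apply Hj. exact (@sax_inj A j1 j2 HA E). split; apply inf_pres; auto.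
    - intros c0 Hc0. set (c := scell Ai c0).
      assert (Hc : pt c = q).
      { unfold c. rewrite pt_scell, Hc0, <- spt_comp, E2, spt_sid; auto. }
      destruct (H c Hc) as [K1 K2].
      assert (Ec : bt_perm_inv b c = c0).
      { rewrite bpi_eq. fold m. rewrite Hc. fold A. unfold c.
        rewrite <- scell_comp by auto. rewrite E1. apply scell_sid. }
      assert (Ec' : bt_perm_inv b (scell s c) = scell s' c0).
      { rewrite bpi_eq. fold m. rewrite pt_scell, Hc by auto. fold B. unfold c, s'.
        rewrite !scell_comp by auto using G_comp. reflexivity. }
      rewrite Ec, Ec' in *. auto. }
  unfold s' in K. rewrite !spt_comp in K. rewrite <- (spt_comp Ai A), E2, spt_sid in K.
  (* injectivity of p |-> spt (Rb b m p) p *)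
  assert (Keep : get (spt s q) (bt_axis b) = get q (bt_axis b)).
  { rewrite <- (Rm_keep (bt_axis b) (bt_val b) m (spt s q) (spt s q)).
    change (Rm (bt_axis b) (bt_val b) m (spt s q)) with B. rewrite K. apply Rm_keep. }
  assert (EB : B = A) by (apply Rm_congr; auto).
  rewrite EB in K. apply (f_equal (spt Ai)) in K. rewrite <- !spt_comp, E2, !spt_sid in K. auto.
Qed.

Definition mkc {L} (q : point L) (j : axis) : list (cell L) :=
  match bool_dec (is_inf (get q j)) true with
  | left H => [exist (fun r : point L * axis => is_inf (get (fst r) (snd r)) = true) (q, j) H]
  | right _ => [] end.
Definition cells_at {L} (q : point L) := mkc q AX ++ mkc q AY ++ mkc q AZ.
Lemma in_cells_at {L} (c : cell L) q : pt c = q -> In c (cells_at q).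
Proof. destruct c as [[p j] H]. unfold pt; simpl. intro E; subst.
  unfold cells_at.
  destruct j; [apply in_or_app; left | apply in_or_app; right; apply in_or_app; left
    | apply in_or_app; right; apply in_or_app; right];
  unfold mkc; (destruct bool_dec as [H'|H']; [left; apply cell_eq; reflexivity | exfalso; apply H'; exact H]). Qed.
Lemma cells_at_pt {L} (c : cell L) q : In c (cells_at q) -> pt c = q.
Proof. unfold cells_at, mkc. intro H.
  repeat (destruct bool_dec); simpl in H; intuition subst; reflexivity. Qed.

Section Stages.
Variable I : Type.
Variable lt : I -> I -> Prop.
Hypothesis Hwo : well_order lt.

Lemma wf_slt : well_founded (slt lt).
Proof.
  destruct Hwo as [Hwf _].
  assert (HS : forall a, Acc (slt lt) (Some a)).
  { intro a. induction (Hwf a) as [a _ IH]. constructor. intros [b|] Hb; simpl in Hb.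
    apply IH; auto. contradiction. }
  intros [a|]; auto. constructor. intros [b|] Hb; simpl in Hb; auto. contradiction. Qed.

Lemma acc_irr {A} (R : A -> A -> Prop) x : Acc R x -> ~ R x x.
Proof. induction 1 as [x _ IH]. intro H. exact (IH x H H). Qed.
Lemma slt_irr s : ~ slt lt s s.
Proof. apply acc_irr. apply wf_slt. Qed.
Lemma slt_trans a b c : slt lt a b -> slt lt b c -> slt lt a c.
Proof. destruct Hwo as [_ [Ht _]]. destruct a, b, c; simpl; eauto; tauto. Qed.
Lemma slt_trich a b : slt lt a b \/ a = b \/ slt lt b a.
Proof. destruct Hwo as [_ [_ Htr]]. destruct a as [a|], b as [b|]; simpl; auto.
  destruct (Htr a b) as [H|[H|H]]; subst; auto. Qed.
Lemma sle_refl a : sle lt a a. Proof. right; auto. Qed.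
Lemma sle_trans a b c : sle lt a b -> sle lt b c -> sle lt a c.
Proof. intros [H|H] [K|K]; subst; unfold sle; eauto using slt_trans. Qed.
Lemma slt_sle_trans a b c : slt lt a b -> sle lt b c -> slt lt a c.
Proof. intros H [K|K]; subst; eauto using slt_trans. Qed.
Lemma sle_slt_trans a b c : sle lt a b -> slt lt b c -> slt lt a c.
Proof. intros [H|H] K; subst; eauto using slt_trans. Qed.
Lemma slt_sle_false a b : slt lt a b -> sle lt b a -> False.
Proof. intros H K. apply (slt_irr a). eapply slt_sle_trans; eauto. Qed.
Lemma not_slt_sle a b : ~ slt lt a b -> sle lt b a.
Proof. intro H. destruct (slt_trich a b) as [K|[K|K]]; [tauto| subst; apply sle_refl | left; auto]. Qed.
Lemma slt_sle a b : slt lt a b -> sle lt a b. Proof. left; auto. Qed.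
Lemma sle_None a : sle lt a None. Proof. destruct a; [left; simpl; auto | right; auto]. Qed.

Lemma max2 a b : exists m, sle lt a m /\ sle lt b m /\ (m = a \/ m = b).
Proof. destruct (slt_trich a b) as [H|[H|H]].
  - exists b. split; [left; auto| split; [apply sle_refl| auto]].
  - subst. exists b. split; [apply sle_refl| split; [apply sle_refl| auto]].
  - exists a. split; [apply sle_refl| split; [left; auto| auto]]. Qed.

Definition is_succ (e : I) (s : stage I) : Prop :=
  slt lt (Some e) s /\ forall t, slt lt (Some e) t -> sle lt s t.

Lemma classify s : (forall t, ~ slt lt t s) \/ (exists e, is_succ e s) \/ is_limit lt s.
Proof.
  destruct (classic (exists t, slt lt t s)) as [[t Ht]|Hn].
  - right. destruct (classic (exists e, is_succ e s)) as [He|He]; [left; auto| right].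
    split; [exists t; auto|]. intros u Hu. apply NNPP. intro Hne.
    apply He. destruct u as [e|]; [|contradiction].
    exists e. split; auto. intros v Hv. apply not_slt_sle. intro Hvs. apply Hne. exists v; auto.
  - left. intros t Ht. apply Hn. exists t; auto. Qed.

Lemma succ_exists e s : slt lt (Some e) s -> exists s', is_succ e s' /\ sle lt s' s.
Proof.
  intro H.
  destruct (well_founded_ind wf_slt (fun x => ~ slt lt (Some e) x \/ exists s', is_succ e s' /\ sle lt s' x)) with (a := s) as [K|K]; auto.
  intros x IH. destruct (classic (slt lt (Some e) x)) as [Hx|Hx]; [right|left; auto].
  destruct (classic (exists y, slt lt y x /\ slt lt (Some e) y)) as [[y [Hy1 Hy2]]|Hn].
  - destruct (IH y Hy1) as [K|[s' [K1 K2]]]; [tauto|]. exists s'. split; auto. eapply sle_trans; eauto. left; auto.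
  - exists x. split; [split; auto| apply sle_refl]. intros t Ht. apply not_slt_sle. intro Htx. apply Hn. eauto.
  - tauto.
Qed.

Lemma is_succ_slt e s : is_succ e s -> forall t, slt lt t s -> sle lt t (Some e).
Proof. intros [H1 H2] t Ht. apply not_slt_sle. intro K. exact (slt_sle_false Ht (H2 t K)). Qed.

Section Run.
Variables (L X : Type) (sigma : I -> basic_twist L) (f0 : labelling L X) (F : stage I -> labelling L X).
Hypothesis Hrun : is_run lt sigma f0 F.

Lemma run_succ e s : is_succ e s -> F s = act (sigma e) (F (Some e)).
Proof. intros [H1 H2]. apply (proj1 (proj2 Hrun)); auto. Qed.
Lemma run_min s : (forall t, ~ slt lt t s) -> F s = f0.
Proof. apply (proj1 Hrun). Qed.
Lemma run_lim s c v : is_limit lt s -> eventually_const lt F s c v -> F s c = v.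
Proof. intros Hl. apply (proj1 (proj2 (proj2 Hrun) s Hl c)). Qed.
Lemma run_lim_none s c : is_limit lt s -> (~ exists v, eventually_const lt F s c v) -> F s c = None.
Proof. intros Hl. apply (proj2 (proj2 (proj2 Hrun) s Hl c)). Qed.

Lemma lim_ev s c : is_limit lt s -> F s c <> None -> eventually_const lt F s c (F s c).
Proof. intros Hl Hn. destruct (classic (exists v, eventually_const lt F s c v)) as [[v Hv]|Hv].
  rewrite (run_lim Hl Hv). auto. exfalso. apply Hn. apply run_lim_none; auto. Qed.

Lemma tail_list s (l : list (cell L)) : is_limit lt s -> (forall c, In c l -> F s c <> None) ->
  exists t, slt lt t s /\ forall u, sle lt t u -> slt lt u s -> forall c, In c l -> F u c = F s c.
Proof.
  intros Hl. induction l as [|c l IH]; intros Hn.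
  - destruct (proj1 Hl) as [t Ht]. exists t. split; auto. intros u _ _ c [].
  - destruct IH as [t2 [Ht2 K2]]. intros d Hd. apply Hn. right; auto.
    destruct (lim_ev Hl (Hn c (or_introl eq_refl))) as [t1 [Ht1 K1]].
    destruct (max2 t1 t2) as [m [Hm1 [Hm2 Hm]]].
    exists m. split. destruct Hm; subst; auto.
    intros u Hu Hus d [Hd|Hd].
    + subst. apply K1; auto. eapply sle_trans; eauto.
    + apply K2; auto. eapply sle_trans; eauto.
Qed.

Lemma INV_all : INV f0 -> forall u, INV (F u).
Proof.
  intro H0. intro u. induction u as [u IH] using (well_founded_ind wf_slt).
  destruct (classify u) as [Hm|[[e He]|Hl]].
  - rewrite run_min; auto.
  - rewrite (run_succ He). apply INV_act. apply IH. apply He.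
  - intros s Hs q Hq H.
    destruct (@tail_list u (cells_at q ++ map (scell s) (cells_at q)) Hl) as [t [Ht K]].
    { intros c Hc. apply in_app_or in Hc. destruct Hc as [Hc|Hc].
      - apply (H c). apply (cells_at_pt c q); auto.
      - apply in_map_iff in Hc. destruct Hc as [d [<- Hd]].
        destruct (H d (cells_at_pt d q Hd)) as [E1 E2]. rewrite E1; auto. }
    apply (IH t Ht s Hs q Hq). intros c Hc.
    assert (Hc1 : In c (cells_at q ++ map (scell s) (cells_at q))) by (apply in_or_app; left; apply in_cells_at; auto).
    assert (Hc2 : In (scell s c) (cells_at q ++ map (scell s) (cells_at q))) by (apply in_or_app; right; apply in_map; apply in_cells_at; auto).
    rewrite (K t (sle_refl t) Ht c Hc1), (K t (sle_refl t) Ht _ Hc2). apply H; auto.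
Qed.

Lemma persist s c : F s c = None -> forall u, sle lt s u -> exists g, In g G /\ F u (scell g c) = None.
Proof.
  intros H0 u. induction u as [u IH] using (well_founded_ind wf_slt). intros Hsu.
  destruct Hsu as [Hsu|Hsu]; [|subst; exists sid; split; [apply sid_G| rewrite scell_sid; auto]].
  destruct (classify u) as [Hm|[[e He]|Hl]].
  - exfalso. exact (Hm s Hsu).
  - assert (Hse : sle lt s (Some e)) by (apply (is_succ_slt He); auto).
    destruct (IH (Some e) (proj1 He) Hse) as [g [Hg Eg]].
    set (y := scell g c).
    exists (comp (Rb (sigma e) (pow_nat (bt_pow (sigma e))) (pt y)) g). split.
    apply G_comp; auto. apply Rm_G.
    rewrite (run_succ He). unfold act. rewrite scell_comp by (auto; apply Rm_G).
    fold y. rewrite <- bp_eq, bpi_bp. auto.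
  - apply NNPP. intro Hn.
    destruct (@tail_list u (map (fun g => scell g c) G) Hl) as [t [Ht K]].
    { intros d Hd. apply in_map_iff in Hd. destruct Hd as [g [<- Hg]]. intro E. apply Hn. exists g; auto. }
    destruct (max2 t s) as [w [Hw1 [Hw2 Hw]]].
    assert (Hwu : slt lt w u) by (destruct Hw; subst; auto).
    destruct (IH w Hwu Hw2) as [g [Hg Eg]].
    apply Hn. exists g. split; auto. rewrite <- (K w Hw1 Hwu (scell g c)); auto. apply (in_map (fun g0 => scell g0 c)); auto.
Qed.

Lemma persist_final s c : F s c = None -> ~ legal (F None).
Proof. intros H Hl. destruct (persist H (sle_None s)) as [g [_ E]]. exact (Hl _ E). Qed.

End Run.
End Stages.

Definition qpt {L} (i : axis) (a : coord L) : point L :=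
  match i with AX => (a, pinf, pinf) | AY => (pinf, a, pinf) | AZ => (pinf, pinf, a) end.
Lemma get_qpt {L} i (a : coord L) : get (qpt i a) i = a.
Proof. destruct i; reflexivity. Qed.
Lemma two_inf_qpt {L} i (a : coord L) : two_inf (qpt i a).
Proof. destruct i; [exists AY, AZ | exists AX, AZ | exists AX, AY]; repeat split; discriminate. Qed.
Lemma qpt_moves {L} i (a : coord L) k : spt (gpow i (pow_nat k)) (qpt i a) <> qpt i a.
Proof. destruct i, k; cbv; intro H; inversion H. Qed.

Section Main.
Variable I : Type.
Variable lt : I -> I -> Prop.
Hypothesis Hwo : well_order lt.

Lemma wf_min (P : stage I -> Prop) x : P x -> exists y, P y /\ forall z, slt lt z y -> ~ P z.
Proof.
  revert x. apply (well_founded_ind (wf_slt Hwo) (fun x => P x -> exists y, P y /\ forall z, slt lt z y -> ~ P z)).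
  intros x IH Px. destruct (classic (exists z, slt lt z x /\ P z)) as [[z [Hz Pz]]|Hn].
  - apply (IH z Hz Pz).
  - exists x. split; auto. intros z Hz Pz. apply Hn. eauto. Qed.

Lemma ev_unique {L X} (F : stage I -> labelling L X) s c v w :
  eventually_const lt F s c v -> eventually_const lt F s c w -> v = w.
Proof. intros [t1 [H1 K1]] [t2 [H2 K2]]. destruct (max2 Hwo t1 t2) as [m [Hm1 [Hm2 Hm]]].
  assert (Hms : slt lt m s) by (destruct Hm; subst; auto).
  rewrite <- (K1 m Hm1 Hms). apply K2; auto. Qed.

Lemma succ_uniq e e' s : is_succ lt e s -> is_succ lt e' s -> e = e'.
Proof. intros [H1 H2] [K1 K2]. destruct Hwo as [_ [_ Htr]].
  destruct (Htr e e') as [E|[E|E]]; auto; exfalso.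
  - apply (slt_sle_false Hwo K1 (H2 (Some e') E)).
  - apply (slt_sle_false Hwo H1 (K2 (Some e) E)). Qed.

Section Run2.
Variables (L X : Type) (sigma : I -> basic_twist L) (f0 : labelling L X) (F : stage I -> labelling L X).
Hypothesis Hrun : is_run lt sigma f0 F.

Lemma notTF_illegal : INV f0 -> ~ twist_finite sigma -> ~ legal (F None).
Proof.
  intros H0 HTF Hleg.
  apply not_all_ex_not in HTF. destruct HTF as [b Hb].
  set (occ := fun s => forall l : list I, exists e, sigma e = b /\ slt lt (Some e) s /\ ~ In e l).
  assert (Hocc : occ None).
  { intro l. apply NNPP. intro Hn. apply Hb. exists l. intros e He. apply NNPP. intro Hi.
    apply Hn. exists e. repeat split; auto. }
  destruct (@wf_min occ None Hocc) as [lam [Hlam Hmin]].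
  assert (cof : forall t, slt lt t lam -> exists e, sigma e = b /\ slt lt t (Some e) /\ slt lt (Some e) lam).
  { intros t Ht. pose proof (Hmin t Ht) as Hn. unfold occ in Hn.
    apply not_all_ex_not in Hn. destruct Hn as [l Hl].
    destruct (Hlam (l ++ match t with Some x => [x] | None => [] end)) as [e [E1 [E2 E3]]].
    exists e. repeat split; auto.
    destruct (slt_trich Hwo t (Some e)) as [K|[K|K]]; auto; exfalso.
    - subst. apply E3. apply in_or_app. right. left. auto.
    - apply Hl. exists e. repeat split; auto. intro Hi. apply E3. apply in_or_app. left; auto. }
  assert (Hl : is_limit lt lam).
  { split. destruct (Hlam []) as [e [_ [E _]]]. eauto.
    intros t Ht. destruct (cof t Ht) as [e [_ [E1 E2]]]. eauto. }
  destruct (classic (exists c, F lam c = None)) as [[c Hc]|Hall].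
  { exact (persist_final Hwo Hrun lam c Hc Hleg). }
  assert (Hall' : forall c, F lam c <> None) by (intros c E; apply Hall; eauto).
  assert (Hinv : forall c, F lam c = F lam (bt_perm_inv b c)).
  { intro c. destruct (tail_list Hwo Hrun [c; bt_perm_inv b c] Hl) as [t [Ht K]].
    { intros d _. apply Hall'. }
    destruct (cof t Ht) as [e [Eb [E1 E2]]].
    destruct (succ_exists Hwo e lam E2) as [s' [Hs' _]].
    destruct (cof (Some e) E2) as [e2 [_ [F1 F2]]].
    assert (Hs'l : slt lt s' lam) by (eapply sle_slt_trans; eauto; apply (proj2 Hs'); auto).
    assert (Hts' : sle lt t s') by (left; eapply slt_trans; eauto; apply Hs').
    pose proof (run_succ Hrun Hs') as R. rewrite Eb in R.
    rewrite <- (K s' Hts' Hs'l c (or_introl eq_refl)).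
    rewrite <- (K (Some e) (or_introl E1) E2 (bt_perm_inv b c) (or_intror (or_introl eq_refl))).
    rewrite R. reflexivity. }
  set (i := bt_axis b). set (a := bt_val b). set (M := gpow i (pow_nat (bt_pow b))).
  apply (qpt_moves i a (bt_pow b)).
  apply (INV_all Hwo Hrun H0 lam (gpow_G _ _) (two_inf_qpt i a)).
  intros c Hc.
  assert (EM : scell M c = bt_perm b c).
  { rewrite bp_eq. f_equal. unfold Rb, Rm. rewrite Hc.
    destruct excluded_middle_informative as [_|n]; auto. exfalso. apply n. apply get_qpt. }
  fold M. rewrite EM. split; auto. rewrite (Hinv (bt_perm b c)), bpi_bp. auto.
Qed.

Definition bts (c : cell L) : list (basic_twist L) :=
  flat_map (fun j => map (fun k => BT j (get (pt c) j) k) [P1; P2; P3]) axes.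

Lemma moving_in e c : bt_perm_inv (sigma e) c <> c -> In (sigma e) (bts c).
Proof.
  intro H. apply NNPP. intro Hn. apply H. rewrite bpi_eq. unfold Rb, Rm.
  destruct excluded_middle_informative as [E|E]; [|apply scell_sid].
  exfalso. apply Hn. destruct (sigma e) as [j v k]. simpl in *. subst v.
  destruct j, k; simpl; tauto. Qed.

Lemma tf_list : twist_finite sigma -> forall bs, exists l, forall e, In (sigma e) bs -> In e l.
Proof. intros HT bs. induction bs as [|b bs [l2 IH]].
  - exists []. intros e [].
  - destruct (HT b) as [l1 H1]. exists (l1 ++ l2). intros e [E|E]; apply in_or_app; auto. Qed.

Lemma max_below (l : list I) s : is_limit lt s ->
  exists t, slt lt t s /\ forall e, In e l -> slt lt (Some e) s -> sle lt (Some e) t.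
Proof. intro Hl. induction l as [|e l [t [Ht K]]].
  - destruct (proj1 Hl) as [t Ht]. exists t. split; auto. intros e [].
  - destruct (classic (slt lt (Some e) s)) as [Hes|Hes].
    + destruct (max2 Hwo (Some e) t) as [m [Hm1 [Hm2 Hm]]]. exists m. split. destruct Hm; subst; auto.
      intros e' [E|E] He'. subst; auto. eapply sle_trans; eauto.
    + exists t. split; auto. intros e' [E|E] He'. subst; contradiction. auto. Qed.

Lemma interval t s c : (forall e, sle lt t (Some e) -> slt lt (Some e) s -> bt_perm_inv (sigma e) c = c) ->
  forall u, sle lt t u -> slt lt u s -> F u c = F t c.
Proof.
  intros Hmv u. induction u as [u IH] using (well_founded_ind (wf_slt Hwo)). intros Htu Hus.
  destruct Htu as [Htu|Htu]; [|subst; auto].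
  destruct (classify Hwo u) as [Hm|[[e He]|Hl]].
  - exfalso. exact (Hm t Htu).
  - assert (Hte : sle lt t (Some e)) by (apply (is_succ_slt Hwo He); auto).
    assert (Hes : slt lt (Some e) s) by (eapply slt_trans; eauto; apply He).
    rewrite (run_succ Hrun He). unfold act. rewrite Hmv; auto. apply IH; auto. apply He.
  - apply (run_lim Hrun Hl). exists t. split; auto. intros w Hw Hwu. apply IH; auto.
    eapply slt_trans; eauto.
Qed.

Lemma TF_legal : twist_finite sigma -> legal f0 -> forall u c, F u c <> None.
Proof.
  intros HT H0 u. induction u as [u IH] using (well_founded_ind (wf_slt Hwo)). intro c.
  destruct (classify Hwo u) as [Hm|[[e He]|Hl]].
  - rewrite (run_min Hrun u Hm). apply H0.
  - rewrite (run_succ Hrun He). unfold act. apply IH. apply He.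
  - destruct (tf_list HT (bts c)) as [l Hlist].
    destruct (max_below l Hl) as [t [Ht K]].
    destruct (proj2 Hl t Ht) as [t' [Ht1 Ht2]].
    assert (Hc : forall w, sle lt t' w -> slt lt w u -> F w c = F t' c).
    { apply interval. intros e He1 He2. apply NNPP. intro Hn.
      apply moving_in in Hn. apply Hlist in Hn. pose proof (K e Hn He2) as Hk.
      apply (slt_irr Hwo (Some e)). eapply sle_slt_trans; eauto. eapply slt_sle_trans; eauto. }
    rewrite (run_lim Hrun (v := F t' c) Hl). apply IH; auto.
    exists t'. split; auto.
Qed.

End Run2.

Unset Implicit Arguments.
Section Construct.
Variables (L X : Type) (sigma : I -> basic_twist L) (f0 : labelling L X).

Definition restr s (rec : forall t, slt lt t s -> labelling L X) : stage I -> labelling L X :=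
  fun t => match excluded_middle_informative (slt lt t s) with
           | left p => rec t p | right _ => fun _ => None end.

Definition body s (rec : forall t, slt lt t s -> labelling L X) : labelling L X :=
  let R := restr s rec in
  match excluded_middle_informative (exists t, slt lt t s) with
  | right _ => f0
  | left _ =>
    match excluded_middle_informative (exists e, is_succ lt e s) with
    | left H => act (sigma (proj1_sig (constructive_indefinite_description _ H)))
                    (R (Some (proj1_sig (constructive_indefinite_description _ H))))
    | right _ => fun c =>
        match excluded_middle_informative (exists v, eventually_const lt R s c v) with
        | left H => proj1_sig (constructive_indefinite_description _ H)
        | right _ => None end
    end
  end.

Definition run : stage I -> labelling L X := Fix (wf_slt Hwo) (fun _ => labelling L X) body.

Lemma run_eq s : run s = body s (fun t _ => run t).
Proof. unfold run. apply (Fix_eq (wf_slt Hwo) (fun _ => labelling L X) body). intros x f g Hfg.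
  assert (f = g) as ->; auto.
  apply functional_extensionality_dep; intro y. apply functional_extensionality_dep; intro p. auto. Qed.

Lemma restr_eq s t : slt lt t s -> restr s (fun t _ => run t) t = run t.
Proof. intro H. unfold restr. destruct excluded_middle_informative; [auto|contradiction]. Qed.

Lemma ev_restr s c v : eventually_const lt (restr s (fun t _ => run t)) s c v <-> eventually_const lt run s c v.
Proof. split; intros [t [Ht K]]; exists t; split; auto; intros u Hu Hus; rewrite <- (K u Hu Hus);
  rewrite restr_eq; auto. Qed.

Lemma run_is_run : is_run lt sigma f0 run.
Proof.
  split; [|split].
  - intros s Hs. rewrite run_eq. unfold body.
    destruct excluded_middle_informative as [[t Ht]|_]; [exfalso; exact (Hs t Ht)| auto].
  - intros e s H1 H2. assert (Hsu : is_succ lt e s) by (split; auto).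
    rewrite run_eq. unfold body.
    destruct excluded_middle_informative as [_|Hn]; [|exfalso; apply Hn; eauto].
    destruct excluded_middle_informative as [H|Hn]; [|exfalso; apply Hn; eauto].
    destruct (constructive_indefinite_description _ H) as [e' He']. simpl.
    rewrite (succ_uniq He' Hsu). rewrite restr_eq; auto.
  - intros s Hl c.
    assert (Hns : ~ exists e, is_succ lt e s).
    { intros [e He]. destruct (proj2 Hl (Some e) (proj1 He)) as [u [U1 U2]].
      apply (slt_sle_false Hwo U2 (proj2 He u U1)). }
    rewrite run_eq. unfold body.
    destruct excluded_middle_informative as [_|Hn]; [|exfalso; apply Hn; apply Hl].
    destruct excluded_middle_informative as [H|_]; [contradiction|].
    split.
    + intros v Hv. destruct excluded_middle_informative as [H|Hn].
      * destruct (constructive_indefinite_description _ H) as [v' Hv']. simpl.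
        apply ev_restr in Hv'. eapply ev_unique; eauto.
      * exfalso. apply Hn. exists v. apply ev_restr. auto.
    + intros Hn. destruct excluded_middle_informative as [H|_]; auto.
      exfalso. destruct H as [v Hv]. apply Hn. exists v. apply ev_restr; auto.
Qed.

End Construct.

Lemma TF_conv (L X : Type) (sigma : I -> basic_twist L) (f0 : labelling L X) :
  legal f0 -> twist_finite sigma -> convergent lt sigma f0.
Proof. intros H0 HT. exists (run L X sigma f0). split. apply run_is_run.
  intro c. apply (TF_legal (run_is_run L X sigma f0) HT H0). Qed.

Lemma conv_TF (L X : Type) (sigma : I -> basic_twist L) (f0 : labelling L X) :
  INV f0 -> convergent lt sigma f0 -> twist_finite sigma.
Proof. intros H0 [F [HF Hl]]. apply NNPP. intro Hn. exact (notTF_illegal HF H0 Hn Hl). Qed.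

End Main.

Theorem lemma4p2 (L : Type) (HL : infinite L)
  (I : Type) (lt : I -> I -> Prop) (Hwo : well_order lt)
  (sigma : I -> basic_twist L) :
  (convergent lt sigma (@f_solved L) <-> universally_convergent lt sigma) /\
  (universally_convergent lt sigma <-> twist_finite sigma).
Proof.
  assert (A1 : convergent lt sigma (@f_solved L) -> twist_finite sigma) by (apply conv_TF; auto; apply INV_solved).
  assert (A2 : universally_convergent lt sigma -> twist_finite sigma) by (apply conv_TF; auto; apply INV_identity).
  assert (B1 : twist_finite sigma -> convergent lt sigma (@f_solved L)).
  { apply TF_conv; auto. intros c. rewrite f_solved_eq. destruct (get (pt c) (ax c)), (ax c); discriminate. }
  assert (B2 : twist_finite sigma -> universally_convergent lt sigma).
  { apply TF_conv; auto. intros c. discriminate. }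
  tauto.
Qed.
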